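(* Let $\gamma\colon I\to\mathbb{R}^2$ be a simple, smooth, closed curve (a smooth embedding of a circle into the plane) whose signed curvature satisfies $|k(s)|<1$ for all $s\in I$. Then the closed region bounded by $\gamma$ is locally drawable and locally closed-disk drawable.
   Context: For a curve parametrized by arc length, with unit normal $n(s)$ obtained by rotating $\gamma'(s)$ by $90^\circ$ counterclockwise, the signed curvature $k(s)$ is defined by $\gamma''(s)=k(s)n(s)$. For $A\subseteq\mathbb{R}^2$ let $N(A)=\{x: |x-a|<1 \text{ for some } a\in A\}$ and $N_{\le}(A)=\{x: |x-a|\le 1 \text{ for some } a\in A\}$. Let $\mathcal{D}_1=\{N(A_1): A_1\subseteq\mathbb{R}^2\}$ and for $n\ge 2$ let $\mathcal{D}_n=\{D\cup N(A_n): D\in\mathcal{D}_{n-1}, A_n\subseteq\mathbb{R}^2\}$ if $n$ is odd and $\mathcal{D}_n=\{D\setminus N(A_n): D\in\mathcal{D}_{n-1}, A_n\subseteq\mathbb{R}^2\}$ if $n$ is even; $\mathcal{D}=\bigcup_n\mathcal{D}_n$ is the collection of drawable sets, and $\mathcal{D}_{\le}$ (closed-disk drawable sets) is defined the same way with $N_{\le}$ in place of $N$. A set $B\subseteq\mathbb{R}^2$ is locally drawable if every $x\in\mathbb{R}^2$ has a neighborhood $U$ such that there is $D\in\mathcal{D}$ with $U\cap B=U\cap D$; locally closed-disk drawable is defined analogously with $D\in\mathcal{D}_{\le}$. *)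

(* Defs.v *)
From Stdlib Require Import Reals.
From Coquelicot Require Import Coquelicot.
Open Scope R_scope.

Definition pt := (R * R)%type.
Definition pset := pt -> Prop.

Definition dist2 (x y : pt) : R :=
  sqrt ((fst x - fst y) ^ 2 + (snd x - snd y) ^ 2).

Definition Nbh (A : pset) : pset := fun x => exists a, A a /\ dist2 x a < 1.
Definition Nbh_le (A : pset) : pset := fun x => exists a, A a /\ dist2 x a <= 1.

(* D_0 is empty (unused); D_1 = {N(A_1)};
   D_n = {D u N(A_n)} for n odd, {D \ N(A_n)} for n even (n >= 2). *)
Fixpoint Dn (N : pset -> pset) (n : nat) (D : pset) : Prop :=
  match n with
  | O => False
  | S O => exists A, forall x, D x <-> N A x
  | S m => exists D' A, Dn N m D' /\
      forall x, D x <-> (if Nat.even (S m) then (D' x /\ ~ N A x)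
                         else (D' x \/ N A x))
  end.

Definition drawable (D : pset) : Prop := exists n, Dn Nbh n D.
Definition cdrawable (D : pset) : Prop := exists n, Dn Nbh_le n D.

Definition nbhd (x : pt) (U : pset) : Prop :=
  exists r, 0 < r /\ forall y, dist2 x y < r -> U y.

Definition locally_drawable (B : pset) : Prop :=
  forall x, exists U, nbhd x U /\
    exists D, drawable D /\ forall y, (U y /\ B y) <-> (U y /\ D y).

Definition locally_cdrawable (B : pset) : Prop :=
  forall x, exists U, nbhd x U /\
    exists D, cdrawable D /\ forall y, (U y /\ B y) <-> (U y /\ D y).

Definition image (gx gy : R -> R) : pset :=
  fun p => exists s, p = (gx s, gy s).

Definition path_in_compl (C : pset) (x y : pt) : Prop :=
  exists px py : R -> R,
    (forall t, continuous px t) /\ (forall t, continuous py t) /\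
    (px 0, py 0) = x /\ (px 1, py 1) = y /\
    (forall t, 0 <= t <= 1 -> ~ C (px t, py t)).

(* x lies in a bounded (path-)component of the complement of C.
   For the open set R^2 \ C (C compact), path components = components. *)
Definition in_bounded_component (C : pset) (x : pt) : Prop :=
  ~ C x /\ exists M, forall y, path_in_compl C x y -> fst y ^ 2 + snd y ^ 2 <= M.

Definition closed_region (gx gy : R -> R) : pset :=
  fun p => image gx gy p \/ in_bounded_component (image gx gy) p.

(* Main.v *)
Require Import Defs.
From Stdlib Require Import Reals.
From Coquelicot Require Import Coquelicot.
Open Scope R_scope.
From Stdlib Require Import Lra Lia Classical ZArith.

Definition sq (a b : pt) : R := (fst a - fst b)^2 + (snd a - snd b)^2.

Lemma sq_ge0 a b : 0 <= sq a b.
Proof. unfold sq; apply Rplus_le_le_0_compat; apply pow2_ge_0. Qed.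

Lemma dist2_sq a b : dist2 a b = sqrt (sq a b).
Proof. reflexivity. Qed.

Lemma dist2_ge0 a b : 0 <= dist2 a b.
Proof. apply sqrt_pos. Qed.

Lemma sq_sym a b : sq a b = sq b a.
Proof. unfold sq; ring. Qed.

Lemma dist2_sym a b : dist2 a b = dist2 b a.
Proof. rewrite !dist2_sq, sq_sym; auto. Qed.

Lemma dist2_refl a : dist2 a a = 0.
Proof. rewrite dist2_sq; unfold sq. replace (_ + _) with 0 by ring. apply sqrt_0. Qed.

Lemma dist2_lt_iff a b r : 0 <= r -> (dist2 a b < r <-> sq a b < r^2).
Proof.
  intros Hr; rewrite dist2_sq; split; intro H.
  - pose proof (sqrt_pos (sq a b)). rewrite <- (pow2_sqrt (sq a b)) by apply sq_ge0. nra.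
  - rewrite <- (sqrt_pow2 r Hr). apply sqrt_lt_1_alt. split; auto using sq_ge0.
Qed.

Lemma dist2_le_iff a b r : 0 <= r -> (dist2 a b <= r <-> sq a b <= r^2).
Proof.
  intros Hr; rewrite dist2_sq; split; intro H.
  - pose proof (sqrt_pos (sq a b)). rewrite <- (pow2_sqrt (sq a b)) by apply sq_ge0. nra.
  - rewrite <- (sqrt_pow2 r Hr). apply sqrt_le_1_alt. auto.
Qed.

Lemma dist2_triangle a b c : dist2 a c <= dist2 a b + dist2 b c.
Proof.
  destruct a as [a1 a2], b as [b1 b2], c as [c1 c2].
  pose proof (triangle a1 a2 c1 c2 b1 b2) as H.
  unfold dist_euc, Rsqr in H. unfold dist2; cbn [fst snd].
  assert (E: forall x y, x^2 + y^2 = x*x + y*y) by (intros; ring). rewrite !E.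
  exact H.
Qed.

Definition seg (a b : pt) (l : R) : pt :=
  (fst a + l * (fst b - fst a), snd a + l * (snd b - snd a)).

Lemma sqrt_scale m X : 0 <= X -> sqrt (m^2 * X) = Rabs m * sqrt X.
Proof.
  intros HX. rewrite sqrt_mult by nra. rewrite <- sqrt_Rsqr_abs. unfold Rsqr. f_equal. f_equal. ring.
Qed.

Lemma seg_dist a b p l : 0 <= l <= 1 ->
  dist2 (seg a b l) p <= (1 - l) * dist2 a p + l * dist2 b p.
Proof.
  intros Hl.
  set (X := (fst p + l * (fst b - fst p), snd p + l * (snd b - snd p))).
  eapply Rle_trans. apply (dist2_triangle _ X _).
  apply Rplus_le_compat; apply Req_le.
  - unfold dist2, seg, X; cbn [fst snd].
    replace ((fst a + l * (fst b - fst a) - (fst p + l * (fst b - fst p))) ^ 2 +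
             (snd a + l * (snd b - snd a) - (snd p + l * (snd b - snd p))) ^ 2)
      with ((1 - l)^2 * ((fst a - fst p)^2 + (snd a - snd p)^2)) by ring.
    rewrite sqrt_scale by (apply Rplus_le_le_0_compat; apply pow2_ge_0). rewrite Rabs_right by lra. auto.
  - unfold dist2, X; cbn [fst snd].
    replace ((fst p + l * (fst b - fst p) - fst p) ^ 2 + (snd p + l * (snd b - snd p) - snd p) ^ 2)
      with (l^2 * ((fst b - fst p)^2 + (snd b - snd p)^2)) by ring.
    rewrite sqrt_scale by (apply Rplus_le_le_0_compat; apply pow2_ge_0). rewrite Rabs_right by lra. auto.
Qed.

Lemma seg_lt a b p l r : 0 <= l <= 1 -> dist2 a p < r -> dist2 b p < r -> dist2 (seg a b l) p < r.
Proof. intros Hl Ha Hb. eapply Rle_lt_trans. apply seg_dist; auto.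
  assert ((1-l)*dist2 a p <= (1-l)*r) by (apply Rmult_le_compat_l; lra).
  destruct (Rle_lt_or_eq_dec 0 l) as [Hl0|Hl0]; try lra.
  - assert (l*dist2 b p < l*r) by (apply Rmult_lt_compat_l; lra). lra.
  - subst l. lra. Qed.

Lemma seg_le a b p l r : 0 <= l <= 1 -> dist2 a p <= r -> dist2 b p <= r -> dist2 (seg a b l) p <= r.
Proof. intros Hl Ha Hb. eapply Rle_trans. apply seg_dist; auto.
  assert ((1-l)*dist2 a p <= (1-l)*r) by (apply Rmult_le_compat_l; lra).
  assert (l*dist2 b p <= l*r) by (apply Rmult_le_compat_l; lra). lra. Qed.

Definition fullset : pset := fun _ => True.

Lemma Nbh_Nbh_le A x : Nbh A x -> Nbh_le A x.
Proof. intros [a [Ha Hd]]; exists a; split; auto; lra. Qed.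

Lemma repr (Nop : pset -> pset)
  (Hn1 : forall A x, Nbh A x -> Nop A x) (Hn2 : forall A x, Nop A x -> Nbh_le A x)
  (U B Im AP AM : pset) (bP bM : Prop) :
  (forall q, U q -> ~ Im q -> Nbh AP q \/ Nbh AM q) ->
  (forall q, U q -> Nbh_le AP q -> ~ Im q /\ (B q <-> bP)) ->
  (forall q, U q -> Nbh_le AM q -> ~ Im q /\ (B q <-> bM)) ->
  (forall q, Im q -> B q) ->
  exists D, (exists n, Dn Nop n D) /\ forall y, (U y /\ B y) <-> (U y /\ D y).
Proof.
  intros Hcov HP HM HI.
  assert (Hfull : forall x, Nop fullset x).
  { intros x. apply Hn1. exists x. split. exact I. rewrite dist2_refl. lra. }
  assert (D1 : Dn Nop 1 (Nop fullset)).
  { simpl. exists fullset. intros; tauto. }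
  destruct (classic bP) as [bp | nbp]; destruct (classic bM) as [bm | nbm].
  - exists (Nop fullset). split. exists 1%nat. auto.
    intros y; split; intros [Hu Hy]; split; auto.
    destruct (classic (Im y)) as [Hi|Hi]; auto.
    destruct (Hcov y Hu Hi) as [Hn|Hn].
    + apply (HP y Hu (Nbh_Nbh_le _ _ Hn)). auto.
    + apply (HM y Hu (Nbh_Nbh_le _ _ Hn)). auto.
  - exists (fun y => Nop fullset y /\ ~ Nop AM y). split.
    { exists 2%nat. simpl. exists (Nop fullset), AM. split; auto. intros; tauto. }
    intros y; split; intros [Hu Hy]; split; auto.
    + split; auto. intro Hn. apply Hn2 in Hn. apply (HM y Hu Hn) in Hy. tauto.
    + destruct Hy as [_ Hy].
      destruct (classic (Im y)) as [Hi|Hi]; auto.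
      destruct (Hcov y Hu Hi) as [Hn|Hn].
      * apply (HP y Hu (Nbh_Nbh_le _ _ Hn)). auto.
      * exfalso; apply Hy, Hn1, Hn.
  - exists (fun y => Nop fullset y /\ ~ Nop AP y). split.
    { exists 2%nat. simpl. exists (Nop fullset), AP. split; auto. intros; tauto. }
    intros y; split; intros [Hu Hy]; split; auto.
    + split; auto. intro Hn. apply Hn2 in Hn. apply (HP y Hu Hn) in Hy. tauto.
    + destruct Hy as [_ Hy].
      destruct (classic (Im y)) as [Hi|Hi]; auto.
      destruct (Hcov y Hu Hi) as [Hn|Hn].
      * exfalso; apply Hy, Hn1, Hn.
      * apply (HM y Hu (Nbh_Nbh_le _ _ Hn)). auto.
  - exists (fun y => Nop fullset y /\ ~ Nop (fun c => AP c \/ AM c) y). split.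
    { exists 2%nat. simpl. exists (Nop fullset), (fun c => AP c \/ AM c). split; auto. intros; tauto. }
    intros y; split; intros [Hu Hy]; split; auto.
    + split; auto. intro Hn. apply Hn2 in Hn. destruct Hn as [a [[Ha|Ha] Hd]].
      * assert (Nbh_le AP y) by (exists a; auto). apply (HP y Hu H) in Hy. tauto.
      * assert (Nbh_le AM y) by (exists a; auto). apply (HM y Hu H) in Hy. tauto.
    + destruct Hy as [_ Hy].
      destruct (classic (Im y)) as [Hi|Hi]; auto.
      exfalso; apply Hy, Hn1.
      destruct (Hcov y Hu Hi) as [[a [Ha Hd]]|[a [Ha Hd]]]; exists a; auto.
Qed.

Lemma Rcont_plus (f g : R -> R) x : continuous f x -> continuous g x -> continuous (fun t => f t + g t) x.
Proof. intros; apply (continuous_plus f g); auto. Qed.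
Lemma Rcont_minus (f g : R -> R) x : continuous f x -> continuous g x -> continuous (fun t => f t - g t) x.
Proof. intros; apply (continuous_minus f g); auto. Qed.
Lemma Rcont_mult (f g : R -> R) x : continuous f x -> continuous g x -> continuous (fun t => f t * g t) x.
Proof. intros; apply (continuous_mult f g); auto. Qed.
Lemma Rcont_comp (f g : R -> R) x : continuous f x -> continuous g (f x) -> continuous (fun t => g (f t)) x.
Proof. intros; apply (continuous_comp f g); auto. Qed.
Lemma Rcont_lin a b x : continuous (fun t => a + b * t) x.
Proof. apply (@ex_derive_continuous R_AbsRing R_NormedModule). auto_derive. auto. Qed.

Definition clo (t : R) := (2*t + 1 - Rabs (2*t - 1)) / 2.
Definition chi (t : R) := (2*t - 1 + Rabs (2*t - 1)) / 2.

Lemma clo_eq (t : R) : (/2) * (1 + 2 * t) + (-/2) * Rabs (-1 + 2 * t) = clo t.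
Proof. unfold clo. replace (-1 + 2*t) with (2*t-1) by ring. field. Qed.
Lemma chi_eq (t : R) : (/2) * (-1 + 2 * t) + (/2) * Rabs (-1 + 2 * t) = chi t.
Proof. unfold chi. replace (-1 + 2*t) with (2*t-1) by ring. field. Qed.

Lemma clo_cont x : continuous clo x.
Proof.
  apply (continuous_ext (fun t => (/2) * (1 + 2 * t) + (-/2) * Rabs (-1 + 2 * t))).
  { exact clo_eq. }
  apply Rcont_plus. apply (Rcont_mult (fun _ => /2) (fun t => 1 + 2 * t)). apply continuous_const. apply Rcont_lin.
  apply (Rcont_mult (fun _ => -/2)). apply continuous_const. apply continuous_Rabs_comp. apply Rcont_lin.
Qed.

Lemma chi_cont x : continuous chi x.
Proof.
  apply (continuous_ext (fun t => (/2) * (-1 + 2 * t) + (/2) * Rabs (-1 + 2 * t))).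
  { exact chi_eq. }
  apply Rcont_plus. apply (Rcont_mult (fun _ => /2) (fun t => -1 + 2 * t)). apply continuous_const. apply Rcont_lin.
  apply (Rcont_mult (fun _ => /2)). apply continuous_const. apply continuous_Rabs_comp. apply Rcont_lin.
Qed.

Lemma clo_lo t : t <= /2 -> clo t = 2 * t.
Proof. intros; unfold clo; rewrite Rabs_left1 by lra; field. Qed.
Lemma chi_lo t : t <= /2 -> chi t = 0.
Proof. intros; unfold chi; rewrite Rabs_left1 by lra; field. Qed.
Lemma clo_hi t : /2 <= t -> clo t = 1.
Proof. intros; unfold clo; rewrite Rabs_right by lra; field. Qed.
Lemma chi_hi t : /2 <= t -> chi t = 2 * t - 1.
Proof. intros; unfold chi; rewrite Rabs_right by lra; field. Qed.

Lemma path_rev C x y : path_in_compl C x y -> path_in_compl C y x.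
Proof.
  intros [px [py [Hx [Hy [H0 [H1 Hc]]]]]].
  exists (fun t => px (1 + (-1) * t)), (fun t => py (1 + (-1) * t)).
  repeat split.
  - intros t; apply Rcont_comp. apply Rcont_lin. apply Hx.
  - intros t; apply Rcont_comp. apply Rcont_lin. apply Hy.
  - replace (1 + -1 * 0) with 1 by ring. auto.
  - replace (1 + -1 * 1) with 0 by ring. auto.
  - intros t Ht. apply Hc. lra.
Qed.

Lemma path_concat C x y z : path_in_compl C x y -> path_in_compl C y z -> path_in_compl C x z.
Proof.
  intros [px [py [Hx [Hy [H0 [H1 Hc]]]]]] [qx [qy [Kx [Ky [K0 [K1 Kc]]]]]].
  exists (fun t => px (clo t) + qx (chi t) - px 1), (fun t => py (clo t) + qy (chi t) - py 1).
  assert (E1 : px 1 = fst y /\ py 1 = snd y) by (rewrite <- H1; auto).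
  assert (E2 : qx 0 = fst y /\ qy 0 = snd y) by (rewrite <- K0; auto).
  repeat split.
  - intros t. apply Rcont_minus. apply Rcont_plus.
    apply Rcont_comp. apply clo_cont. apply Hx. apply Rcont_comp. apply chi_cont. apply Kx.
    apply continuous_const.
  - intros t. apply Rcont_minus. apply Rcont_plus.
    apply Rcont_comp. apply clo_cont. apply Hy. apply Rcont_comp. apply chi_cont. apply Ky.
    apply continuous_const.
  - rewrite clo_lo, chi_lo by lra. replace (2*0) with 0 by ring. rewrite <- H0.
    f_equal; lra.
  - rewrite clo_hi, chi_hi by lra. replace (2*1-1) with 1 by ring. rewrite <- K1.
    f_equal; lra.
  - intros t Ht. destruct (Rle_dec t (/2)).
    + rewrite clo_lo, chi_lo by lra.
      replace (px (2 * t) + qx 0 - px 1) with (px (2*t)) by lra.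
      replace (py (2 * t) + qy 0 - py 1) with (py (2*t)) by lra.
      apply Hc. lra.
    + rewrite clo_hi, chi_hi by lra.
      replace (px 1 + qx (2*t-1) - px 1) with (qx (2*t-1)) by lra.
      replace (py 1 + qy (2*t-1) - py 1) with (qy (2*t-1)) by lra.
      apply Kc. lra.
Qed.

Lemma path_notC_l C x y : path_in_compl C x y -> ~ C x.
Proof. intros [px [py [_ [_ [H0 [_ Hc]]]]]]. rewrite <- H0. apply Hc. lra. Qed.
Lemma path_notC_r C x y : path_in_compl C x y -> ~ C y.
Proof. intros [px [py [_ [_ [_ [H1 Hc]]]]]]. rewrite <- H1. apply Hc. lra. Qed.

Lemma ibc_path C x y : path_in_compl C x y -> in_bounded_component C x -> in_bounded_component C y.
Proof.
  intros Hp [Hx [M HM]]. split. eapply path_notC_r; eauto.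
  exists M. intros z Hz. apply HM. eapply path_concat; eauto.
Qed.

Lemma path_region gx gy x y : path_in_compl (image gx gy) x y ->
  (closed_region gx gy x <-> closed_region gx gy y).
Proof.
  intros Hp. pose proof (path_notC_l _ _ _ Hp). pose proof (path_notC_r _ _ _ Hp).
  unfold closed_region. split; intros [Hq|Hq]; try tauto.
  - right. eapply ibc_path; eauto.
  - right. eapply ibc_path; eauto. apply path_rev; auto.
Qed.

Lemma cpt_of_der f x : ex_derive f x -> continuity_pt f x.
Proof. intros H. apply continuity_pt_filterlim. apply (@ex_derive_continuous R_AbsRing R_NormedModule). auto. Qed.

Lemma cont_eps (f : R -> R) x : continuity_pt f x -> forall e, 0 < e ->
  exists d, 0 < d /\ forall y, Rabs (y - x) < d -> Rabs (f y - f x) < e.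
Proof.
  intros H e He. destruct (H e He) as [d [Hd Hy]]. exists d; split; auto.
  intros y Hyx. destruct (Req_dec y x) as [->|Hne].
  - replace (f x - f x) with 0 by ring. rewrite Rabs_R0. auto.
  - apply (Hy y). split. split. exact I. auto. exact Hyx.
Qed.

Ltac Rconv := repeat match goal with
  | |- context [@plus ?G ?a ?b] => change (@plus G a b) with (Rplus a b)
  | |- context [@opp ?G ?a] => change (@opp G a) with (Ropp a)
  | |- context [@minus ?G ?a ?b] => change (@minus G a b) with (Rminus a b)
  | |- context [@mult ?G ?a ?b] => change (@mult G a b) with (Rmult a b)
  | |- context [@scal ?K ?G ?a ?b] => change (@scal K G a b) with (Rmult a b)
  | |- context [@zero ?G] => change (@zero G) with 0
  end.
Ltac Rring := match goal with |- ?a = ?b => change (@eq R a b); ring end.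

Lemma sq_of_abs x e : Rabs x <= e -> x ^ 2 <= e ^ 2.
Proof. intros H. rewrite <- (pow2_abs x). pose proof (Rabs_pos x). nra. Qed.
Lemma abs_of_sq x e : 0 <= e -> x ^ 2 <= e ^ 2 -> Rabs x <= e.
Proof. intros He H. rewrite <- (pow2_abs x) in H. pose proof (Rabs_pos x).
  destruct (Rle_dec (Rabs x) e); auto. nra. Qed.

Section Curve.
Variables (gx gy : R -> R) (L : R) (k : R -> R).
Hypothesis HL : 0 < L.
Hypothesis Hper : forall s, gx (s + L) = gx s /\ gy (s + L) = gy s.
Hypothesis Hsm : forall n s, ex_derive (Derive_n gx n) s /\ ex_derive (Derive_n gy n) s.
Hypothesis Hunit : forall s, (Derive gx s) ^ 2 + (Derive gy s) ^ 2 = 1.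
Hypothesis Hinj : forall s t, 0 <= s < L -> 0 <= t < L -> gx s = gx t -> gy s = gy t -> s = t.
Hypothesis Hk : forall s, Derive_n gx 2 s = k s * (- Derive gy s) /\ Derive_n gy 2 s = k s * Derive gx s.
Hypothesis Hkb : forall s, Rabs (k s) < 1.

Local Notation dx := (Derive gx).
Local Notation dy := (Derive gy).
Local Notation ddx := (Derive_n gx 2).
Local Notation ddy := (Derive_n gy 2).

Definition gm s : pt := (gx s, gy s).
Definition off s t : pt := (gx s - t * dy s, gy s + t * dx s).

Lemma exd_gx s : ex_derive gx s. Proof. exact (proj1 (Hsm 0 s)). Qed.
Lemma exd_gy s : ex_derive gy s. Proof. exact (proj2 (Hsm 0 s)). Qed.
Lemma exd_dx s : ex_derive dx s. Proof. exact (proj1 (Hsm 1 s)). Qed.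
Lemma exd_dy s : ex_derive dy s. Proof. exact (proj2 (Hsm 1 s)). Qed.
Lemma exd_ddx s : ex_derive ddx s. Proof. exact (proj1 (Hsm 2 s)). Qed.
Lemma exd_ddy s : ex_derive ddy s. Proof. exact (proj2 (Hsm 2 s)). Qed.
Lemma der_gx s : is_derive gx s (dx s). Proof. apply Derive_correct, exd_gx. Qed.
Lemma der_gy s : is_derive gy s (dy s). Proof. apply Derive_correct, exd_gy. Qed.
Lemma der_dx s : is_derive dx s (ddx s). Proof. apply (Derive_correct dx), exd_dx. Qed.
Lemma der_dy s : is_derive dy s (ddy s). Proof. apply (Derive_correct dy), exd_dy. Qed.

Lemma k_formula s : k s = ddy s * dx s - ddx s * dy s.
Proof. destruct (Hk s) as [H1 H2]. rewrite H1, H2.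
  replace (k s * dx s * dx s - k s * - dy s * dy s) with (k s * (dx s ^2 + dy s ^2)) by ring.
  rewrite Hunit; ring. Qed.

Lemma k_cpt s : continuity_pt k s.
Proof.
  apply continuity_pt_ext with (f := fun s => ddy s * dx s - ddx s * dy s).
  { intros; symmetry; apply k_formula. }
  apply continuity_pt_minus; apply continuity_pt_mult; apply cpt_of_der;
   auto using exd_gx, exd_gy, exd_dx, exd_dy, exd_ddx, exd_ddy.
Qed.

Lemma dx_le1 s : Rabs (dx s) <= 1.
Proof. pose proof (Hunit s). apply Rabs_le. nra. Qed.
Lemma dy_le1 s : Rabs (dy s) <= 1.
Proof. pose proof (Hunit s). apply Rabs_le. nra. Qed.

Lemma lip_gen (f : R -> R) (df : R -> R) u v : (forall x, is_derive f x (df x)) -> (forall x, Rabs (df x) <= 1) ->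
  Rabs (f u - f v) <= Rabs (u - v).
Proof.
  intros Hd Hb. destruct (MVT_gen f v u df) as [c [_ Hc]].
  - intros; auto.
  - intros; apply cpt_of_der. eexists; apply Hd.
  - rewrite Hc, Rabs_mult. pose proof (Hb c). pose proof (Rabs_pos (u - v)). nra.
Qed.

Lemma lip_x u v : Rabs (gx u - gx v) <= Rabs (u - v).
Proof. apply (lip_gen gx dx); auto using der_gx, dx_le1. Qed.
Lemma lip_y u v : Rabs (gy u - gy v) <= Rabs (u - v).
Proof. apply (lip_gen gy dy); auto using der_gy, dy_le1. Qed.


Lemma between_prod s s' xi : Rmin s s' <= xi <= Rmax s s' -> 0 <= (xi - s) * (s' - s).
Proof. unfold Rmin, Rmax; destruct (Rle_dec s s'); intros; nra. Qed.

Lemma between_in a b s s' xi : a <= s <= b -> a <= s' <= b -> Rmin s s' <= xi <= Rmax s s' -> a <= xi <= b.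
Proof. unfold Rmin, Rmax; destruct (Rle_dec s s'); intros; lra. Qed.

Lemma key a b kap T s s' t :
  (forall u, a <= u <= b -> Rabs (k u) <= kap) -> 0 <= kap -> kap * (2 * (b - a) + T) < 1 ->
  a <= s <= b -> a <= s' <= b -> Rabs t <= T ->
  t ^ 2 <= sq (gm s') (off s t).
Proof.
  intros Hkap Hk0 HM Hs Hs' Ht.
  set (cx := gx s - t * dy s). set (cy := gy s + t * dx s).
  set (g := fun u => (gx u - cx) ^ 2 + (gy u - cy) ^ 2).
  set (g1 := fun u => 2 * ((gx u - cx) * dx u + (gy u - cy) * dy u)).
  set (g2 := fun u => 2 * (dx u ^ 2 + dy u ^ 2 + (gx u - cx) * ddx u + (gy u - cy) * ddy u)).
  assert (Dg : forall u, is_derive g u (g1 u)).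
  { intros u. unfold g, g1.
    apply (is_derive_ext (fun u => (gx u - cx) * (gx u - cx) + (gy u - cy) * (gy u - cy))).
    { intros; Rring. }
    evar (l : R). replace (2 * ((gx u - cx) * dx u + (gy u - cy) * dy u)) with l.
    apply (is_derive_plus (fun u => (gx u - cx) * (gx u - cx)) (fun u => (gy u - cy) * (gy u - cy))).
    apply (is_derive_mult (fun u => gx u - cx) (fun u => gx u - cx));
      try (apply (is_derive_minus gx (fun _ => cx)); [apply der_gx | apply is_derive_const]).
    intros; apply Rmult_comm.
    apply (is_derive_mult (fun u => gy u - cy) (fun u => gy u - cy));
      try (apply (is_derive_minus gy (fun _ => cy)); [apply der_gy | apply is_derive_const]).
    intros; apply Rmult_comm.
    unfold l. Rconv. ring. }
  assert (Dg1 : forall u, is_derive g1 u (g2 u)).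
  { intros u. unfold g1, g2.
    evar (l : R). replace (2 * (dx u ^ 2 + dy u ^ 2 + (gx u - cx) * ddx u + (gy u - cy) * ddy u)) with l.
    apply (is_derive_scal (fun u => (gx u - cx) * dx u + (gy u - cy) * dy u)).
    apply (is_derive_plus (fun u => (gx u - cx) * dx u) (fun u => (gy u - cy) * dy u)).
    apply (is_derive_mult (fun u => gx u - cx) dx).
      apply (is_derive_minus gx (fun _ => cx)); [apply der_gx | apply is_derive_const].
      apply der_dx. intros; apply Rmult_comm.
    apply (is_derive_mult (fun u => gy u - cy) dy).
      apply (is_derive_minus gy (fun _ => cy)); [apply der_gy | apply is_derive_const].
      apply der_dy. intros; apply Rmult_comm.
    unfold l. Rconv. ring. }
  destruct (MVT_gen g s s' g1) as [xi [Hxi Exi]].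
  { intros; apply Dg. }
  { intros; apply cpt_of_der. eexists; apply Dg. }
  destruct (MVT_gen g1 s xi g2) as [ze [Hze Eze]].
  { intros; apply Dg1. }
  { intros; apply cpt_of_der. eexists; apply Dg1. }
  assert (Hgs : g s = t ^ 2).
  { unfold g, cx, cy. replace ((gx s - (gx s - t * dy s)) ^ 2 + (gy s - (gy s + t * dx s)) ^ 2)
      with (t^2 * (dx s ^ 2 + dy s ^ 2)) by ring. rewrite Hunit; ring. }
  assert (Hg1s : g1 s = 0).
  { unfold g1, cx, cy. ring. }
  assert (Hxi_in : a <= xi <= b) by exact (between_in a b s s' xi Hs Hs' Hxi).
  assert (Hze_in : a <= ze <= b) by exact (between_in a b s xi ze Hs Hxi_in Hze).
  assert (Hprod : 0 <= (ze - s) * (xi - s) * 0 + (xi - s) * (s' - s)) by (pose proof (between_prod _ _ _ Hxi); lra).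
  assert (Hg2 : 0 <= g2 ze).
  { set (P := (gx ze - cx) * (- dy ze) + (gy ze - cy) * dx ze).
    assert (E2 : g2 ze = 2 * (1 + k ze * P)).
    { unfold g2, P. destruct (Hk ze) as [H1 H2]. rewrite H1, H2, Hunit. ring. }
    set (e := Rabs (ze - s)).
    set (A := gx ze - gx s). set (Bv := gy ze - gy s).
    assert (HA : Rabs A <= e) by apply lip_x.
    assert (HB : Rabs Bv <= e) by apply lip_y.
    assert (He : e <= b - a) by (unfold e; apply Rabs_le; lra).
    assert (HP2 : P ^ 2 <= (A + t * dy s) ^ 2 + (Bv - t * dx s) ^ 2).
    { unfold P, A, Bv, cx, cy. pose proof (Hunit ze).
      replace (gx ze - (gx s - t * dy s)) with (gx ze - gx s + t * dy s) by ring.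
      replace (gy ze - (gy s + t * dx s)) with (gy ze - gy s - t * dx s) by ring.
      set (X := gx ze - gx s + t * dy s). set (Y := gy ze - gy s - t * dx s).
      assert (0 <= (X * dx ze + Y * dy ze) ^ 2) by apply pow2_ge_0.
      nra. }
    assert (HQ : (A * dy s - Bv * dx s) ^ 2 <= 4 * e ^ 2).
    { pose proof (Hunit s).
      assert (0 <= (A * dx s + Bv * dy s) ^ 2) by apply pow2_ge_0.
      assert (A^2 <= e^2) by (apply sq_of_abs; auto). 
      assert (Bv^2 <= e^2) by (apply sq_of_abs; auto).
      nra. }
    assert (HQ' : Rabs (A * dy s - Bv * dx s) <= 2 * e).
    { apply abs_of_sq. pose proof (Rabs_pos (ze - s)); unfold e in *; lra. lra. }
    assert (HS : (A + t * dy s) ^ 2 + (Bv - t * dx s) ^ 2 <= (2 * e + Rabs t) ^ 2).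
    { replace ((A + t * dy s) ^ 2 + (Bv - t * dx s) ^ 2) with
        (A^2 + Bv^2 + t^2 * (dx s ^2 + dy s ^2) + 2 * t * (A * dy s - Bv * dx s)) by ring.
      rewrite Hunit.
      assert (A^2 <= e^2) by (apply sq_of_abs; auto).
      assert (Bv^2 <= e^2) by (apply sq_of_abs; auto).
      assert (2 * t * (A * dy s - Bv * dx s) <= 2 * Rabs t * (2 * e)).
      { pose proof (Rle_abs (t * (A * dy s - Bv * dx s))). rewrite Rabs_mult in H1.
        pose proof (Rabs_pos t). 
        assert (Rabs t * Rabs (A * dy s - Bv * dx s) <= Rabs t * (2 * e)) by (apply Rmult_le_compat_l; auto).
        lra. }
      rewrite <- (pow2_abs t). nra. }
    assert (HPM : Rabs P <= 2 * (b - a) + T).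
    { apply abs_of_sq. pose proof (Rabs_pos t); pose proof (Rabs_pos (ze - s)); unfold e in *; lra.
      eapply Rle_trans. apply HP2. eapply Rle_trans. apply HS.
      apply pow_incr. pose proof (Rabs_pos t); pose proof (Rabs_pos (ze - s)); unfold e in *; lra. }
    assert (HkP : Rabs (k ze * P) < 1).
    { rewrite Rabs_mult. pose proof (Hkap ze Hze_in). pose proof (Rabs_pos P). pose proof (Rabs_pos (k ze)).
      eapply Rle_lt_trans; [|apply HM].
      apply Rmult_le_compat; auto. }
    rewrite E2. pose proof (Rle_abs (- (k ze * P))). rewrite Rabs_Ropp in H. lra. }
  pose proof (between_prod _ _ _ Hxi) as Hpr.
  assert (Hfin : g s' = t ^ 2 + g2 ze * ((xi - s) * (s' - s))).
  { rewrite <- Hgs. replace (g s') with (g s + (g s' - g s)) by ring. rewrite Exi.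
    replace (g1 xi) with (g1 s + (g1 xi - g1 s)) by ring. rewrite Eze, Hg1s. ring. }
  unfold sq, gm, off; cbn [fst snd]. change (t ^ 2 <= g s'). rewrite Hfin.
  pose proof (Rmult_le_pos _ _ Hg2 Hpr). lra.
Qed.

Lemma per_nat n v : gm (v + INR n * L) = gm v.
Proof.
  induction n as [|n IH].
  - simpl. f_equal; f_equal; ring.
  - rewrite S_INR. replace (v + (INR n + 1) * L) with ((v + INR n * L) + L) by ring.
    unfold gm in *. destruct (Hper (v + INR n * L)) as [H1 H2]. rewrite H1, H2. auto.
Qed.

Lemma per_Z m v : gm (v + IZR m * L) = gm v.
Proof.
  destruct (Z_le_gt_dec 0 m) as [Hm|Hm].
  - destruct (IZN m Hm) as [n ->]. rewrite <- INR_IZR_INZ. apply per_nat.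
  - assert (H : (0 <= - m)%Z) by lia. destruct (IZN _ H) as [n Hn].
    replace m with (- Z.of_nat n)%Z by lia. rewrite opp_IZR, <- INR_IZR_INZ.
    rewrite <- (per_nat n (v + - INR n * L)). f_equal. ring.
Qed.

Lemma reduce v a : exists m : Z, a <= v - IZR m * L < a + L.
Proof.
  set (z := (v - a) / L). destruct (archimed z) as [H1 H2].
  exists (up z - 1)%Z. rewrite minus_IZR.
  assert (Ez : z * L = v - a) by (unfold z; field; lra).
  replace (v - (IZR (up z) - 1) * L) with (a + (z - (IZR (up z) - 1)) * L) by (rewrite Rmult_minus_distr_r, Ez; ring).
  split.
  - assert (0 <= (z - (IZR (up z) - 1)) * L) by (apply Rmult_le_pos; lra). lra.
  - assert ((z - (IZR (up z) - 1)) * L < 1 * L) by (apply Rmult_lt_compat_r; lra). lra.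
Qed.

Lemma inj_mod u v : gm u = gm v -> exists m : Z, u - v = IZR m * L.
Proof.
  intros E.
  destruct (reduce u 0) as [m1 H1]. destruct (reduce v 0) as [m2 H2].
  assert (E1 : gm (u - IZR m1 * L) = gm u).
  { replace (u - IZR m1 * L) with (u + IZR (- m1) * L) by (rewrite opp_IZR; ring). apply per_Z. }
  assert (E2 : gm (v - IZR m2 * L) = gm v).
  { replace (v - IZR m2 * L) with (v + IZR (- m2) * L) by (rewrite opp_IZR; ring). apply per_Z. }
  rewrite <- E1, <- E2 in E. unfold gm in E. injection E as Ex Ey.
  assert (Heq : u - IZR m1 * L = v - IZR m2 * L) by (apply Hinj; auto; lra).
  exists (m1 - m2)%Z. rewrite minus_IZR. lra.
Qed.

Lemma no_int (m : Z) : 0 < IZR m * L < L -> False.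
Proof.
  intros [H1 H2].
  assert (0 < IZR m) by (apply (Rmult_lt_reg_r L); lra).
  assert (IZR m < 1) by (apply (Rmult_lt_reg_r L); lra).
  apply lt_IZR in H. apply lt_IZR in H0. lia.
Qed.

Lemma gm_neq u v : 0 < Rabs (u - v) < L -> gm u <> gm v.
Proof.
  intros Hd E. destruct (inj_mod u v E) as [m Hm].
  destruct (Rle_dec 0 (u - v)).
  - rewrite Rabs_right in Hd by lra. apply (no_int m). lra.
  - rewrite Rabs_left in Hd by lra. apply (no_int (- m)). rewrite opp_IZR. lra.
Qed.

Lemma h_exd c u : ex_derive (fun u => sq (gm u) c) u.
Proof. unfold sq, gm; cbn [fst snd]. auto_derive. repeat split; auto using exd_gx, exd_gy. Qed.

Lemma h_cpt c u : continuity_pt (fun u => sq (gm u) c) u.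
Proof. apply cpt_of_der, h_exd. Qed.

Lemma sq_zero a b : sq a b = 0 -> a = b.
Proof.
  destruct a as [a1 a2], b as [b1 b2]; unfold sq; cbn [fst snd]; intros H.
  pose proof (pow2_ge_0 (a1 - b1)). pose proof (pow2_ge_0 (a2 - b2)).
  assert ((a1 - b1)^2 = 0) by lra. assert ((a2 - b2)^2 = 0) by lra.
  assert (a1 - b1 = 0) by (apply Rsqr_0_uniq; unfold Rsqr; lra).
  assert (a2 - b2 = 0) by (apply Rsqr_0_uniq; unfold Rsqr; lra).
  f_equal; lra.
Qed.

Lemma sep s0 eta : 0 < eta -> 2 * eta < L ->
  exists rho, 0 < rho /\ forall v, dist2 (gm v) (gm s0) < rho ->
    exists u, Rabs (u - s0) <= eta /\ gm u = gm v.
Proof.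
  intros He HeL.
  destruct (continuity_ab_min (fun u => sq (gm u) (gm s0)) (s0 + eta) (s0 + L - eta))
    as [mx [Hmx Hin]]. lra. intros; apply h_cpt.
  set (m0 := sq (gm mx) (gm s0)).
  assert (Hm0 : 0 < m0).
  { destruct (Rle_lt_or_eq_dec 0 m0) as [H|H]; auto. apply sq_ge0.
    exfalso. symmetry in H. apply sq_zero in H. revert H. apply gm_neq.
    rewrite Rabs_right by lra. lra. }
  exists (sqrt m0). split. apply sqrt_lt_R0; auto.
  intros v Hv. destruct (reduce v (s0 - eta)) as [m Hm].
  assert (E : gm (v - IZR m * L) = gm v).
  { replace (v - IZR m * L) with (v + IZR (- m) * L) by (rewrite opp_IZR; ring). apply per_Z. }
  destruct (Rle_dec (v - IZR m * L) (s0 + eta)).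
  - exists (v - IZR m * L). split; auto. apply Rabs_le; lra.
  - exfalso. pose proof (Hmx (v - IZR m * L) ltac:(lra)). rewrite E in H.
    rewrite dist2_sq in Hv. apply sqrt_le_1_alt in H. fold m0 in H. lra.
Qed.

Lemma sep_pt x : ~ image gx gy x -> exists r, 0 < r /\ forall v, r <= dist2 (gm v) x.
Proof.
  intros Hx.
  destruct (continuity_ab_min (fun u => sq (gm u) x) 0 L) as [mx [Hmx Hin]]. lra. intros; apply h_cpt.
  set (m0 := sq (gm mx) x).
  assert (Hm0 : 0 < m0).
  { destruct (Rle_lt_or_eq_dec 0 m0) as [H|H]; auto. apply sq_ge0.
    exfalso. symmetry in H. apply sq_zero in H. apply Hx. exists mx. rewrite <- H. auto. }
  exists (sqrt m0). split. apply sqrt_lt_R0; auto.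
  intros v. destruct (reduce v 0) as [m Hm].
  assert (E : gm (v - IZR m * L) = gm v).
  { replace (v - IZR m * L) with (v + IZR (- m) * L) by (rewrite opp_IZR; ring). apply per_Z. }
  pose proof (Hmx (v - IZR m * L) ltac:(lra)). rewrite E in H.
  rewrite dist2_sq. apply sqrt_le_1_alt. auto.
Qed.

Lemma nearest s0 e q : 0 < e ->
  exists s, Rabs (s - s0) <= e /\ forall u, Rabs (u - s0) <= e -> sq (gm s) q <= sq (gm u) q.
Proof.
  intros He.
  destruct (continuity_ab_min (fun u => sq (gm u) q) (s0 - e) (s0 + e)) as [mx [Hmx Hin]]. lra.
  intros; apply h_cpt.
  exists mx. split. apply Rabs_le; lra. intros u Hu. apply Hmx. apply Rabs_le_between in Hu. lra.
Qed.

Lemma crit s a b q : a < s < b -> (forall u, a < u < b -> sq (gm s) q <= sq (gm u) q) ->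
  (gx s - fst q) * dx s + (gy s - snd q) * dy s = 0.
Proof.
  intros Hs Hmin.
  set (f := fun u => sq (gm u) q).
  assert (Hd : is_derive f s (2 * ((gx s - fst q) * dx s + (gy s - snd q) * dy s))).
  { unfold f, sq, gm; cbn [fst snd].
    evar (l : R). replace (2 * ((gx s - fst q) * dx s + (gy s - snd q) * dy s)) with l.
    apply (is_derive_plus (fun u => (gx u - fst q) ^ 2) (fun u => (gy u - snd q) ^ 2)).
    apply (is_derive_pow (fun u => gx u - fst q)).
      apply (is_derive_minus gx (fun _ => fst q)); [apply der_gx | apply is_derive_const].
    apply (is_derive_pow (fun u => gy u - snd q)).
      apply (is_derive_minus gy (fun _ => snd q)); [apply der_gy | apply is_derive_const].
    unfold l. Rconv. simpl. ring. }
  apply is_derive_Reals in Hd.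
  pose proof (deriv_minimum f a b s (exist _ _ Hd) (proj1 Hs) (proj2 Hs)) as H.
  simpl in H. assert (Hm : forall x, a < x -> x < b -> f s <= f x) by (intros; apply Hmin; lra).
  specialize (H Hm). lra.
Qed.

Lemma normal_decomp s q : (gx s - fst q) * dx s + (gy s - snd q) * dy s = 0 ->
  q = off s ((fst q - gx s) * (- dy s) + (snd q - gy s) * dx s).
Proof.
  intros H. destruct q as [q1 q2]; cbn [fst snd] in *. unfold off. pose proof (Hunit s).
  f_equal; apply Rminus_diag_uniq.
  - replace (q1 - _) with ((q1 - gx s) * (1 - (dx s ^ 2 + dy s ^ 2)) - dx s * ((gx s - q1) * dx s + (gy s - q2) * dy s)) by ring.
    rewrite H, H0. ring.
  - replace (q2 - _) with ((q2 - gy s) * (1 - (dx s ^ 2 + dy s ^ 2)) - dy s * ((gx s - q1) * dx s + (gy s - q2) * dy s)) by ring.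
    rewrite H, H0. ring.
Qed.

Lemma off_dist s t : dist2 (off s t) (gm s) = Rabs t.
Proof.
  unfold dist2, off, gm; cbn [fst snd].
  replace ((gx s - t * dy s - gx s) ^ 2 + (gy s + t * dx s - gy s) ^ 2) with (t^2 * (dx s ^2 + dy s ^2)) by ring.
  rewrite Hunit, Rmult_1_r. rewrite <- sqrt_Rsqr_abs. unfold Rsqr. f_equal. ring.
Qed.

Lemma off_off s a b : dist2 (off s a) (off s b) = Rabs (a - b).
Proof.
  unfold dist2, off; cbn [fst snd].
  replace ((gx s - a * dy s - (gx s - b * dy s)) ^ 2 + (gy s + a * dx s - (gy s + b * dx s)) ^ 2)
    with ((a - b)^2 * (dx s ^2 + dy s ^2)) by ring.
  rewrite Hunit, Rmult_1_r. rewrite <- sqrt_Rsqr_abs. unfold Rsqr. f_equal. ring.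
Qed.

Lemma gm_lip u v : dist2 (gm u) (gm v) <= 2 * Rabs (u - v).
Proof.
  apply dist2_le_iff. pose proof (Rabs_pos (u - v)); lra.
  unfold sq, gm; cbn [fst snd].
  pose proof (sq_of_abs _ _ (lip_x u v)). pose proof (sq_of_abs _ _ (lip_y u v)).
  pose proof (pow2_ge_0 (Rabs (u - v))). nra.
Qed.

Lemma off_gm_s0 s a s0 : dist2 (off s a) (gm s0) <= Rabs a + dist2 (gm s) (gm s0).
Proof. eapply Rle_trans. apply (dist2_triangle _ (gm s)). rewrite off_dist. lra. Qed.

Lemma lin_cont c d x : continuous (fun t => c + t * d) x.
Proof. apply (@ex_derive_continuous R_AbsRing R_NormedModule). auto_derive. auto. Qed.

Lemma seg_path C a b : (forall l, 0 <= l <= 1 -> ~ C (seg a b l)) -> path_in_compl C a b.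
Proof.
  intros H. destruct a as [a1 a2], b as [b1 b2].
  exists (fun t => a1 + t * (b1 - a1)), (fun t => a2 + t * (b2 - a2)).
  repeat split; try (intros; apply lin_cont).
  - f_equal; ring.
  - f_equal; ring.
  - intros t Ht. apply (H t Ht).
Qed.

Lemma offset_path C s s' tau : (forall l, 0 <= l <= 1 -> ~ C (off (s + l * (s' - s)) tau)) ->
  path_in_compl C (off s tau) (off s' tau).
Proof.
  intros H.
  exists (fun t => gx (s + t * (s' - s)) - tau * dy (s + t * (s' - s))),
         (fun t => gy (s + t * (s' - s)) + tau * dx (s + t * (s' - s))).
  repeat split.
  - intros t. apply (@ex_derive_continuous R_AbsRing R_NormedModule). auto_derive.
    repeat split; auto using exd_gx, exd_dy.
  - intros t. apply (@ex_derive_continuous R_AbsRing R_NormedModule). auto_derive.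
    repeat split; auto using exd_gy, exd_dx.
  - unfold off. replace (s + 0 * (s' - s)) with s by ring. auto.
  - unfold off. replace (s + 1 * (s' - s)) with s' by ring. auto.
  - intros t Ht. apply (H t Ht).
Qed.

Lemma image_gm z : image gx gy z -> exists v, z = gm v.
Proof. intros [v Hv]. exists v. auto. Qed.

Lemma dist2_pos a b : a <> b -> 0 < dist2 a b.
Proof.
  intros H. destruct (Rle_lt_or_eq_dec 0 (dist2 a b) (dist2_ge0 a b)) as [H1|H1]; auto.
  exfalso. apply H. apply sq_zero. rewrite dist2_sq in H1. symmetry in H1.
  apply sqrt_eq_0 in H1; auto. apply sq_ge0.
Qed.

Lemma Rabs_sig (sg X : R) : (sg = 1 \/ sg = -1) -> Rabs (sg * X) = Rabs X.
Proof. intros [->| ->]; rewrite Rabs_mult; [rewrite Rabs_R1|replace (Rabs (-1)) with 1 by (rewrite Rabs_left; lra)]; ring. Qed.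

Lemma Rabs_sg1 sg : (sg = 1 \/ sg = -1) -> Rabs sg = 1.
Proof. intros [->| ->]. apply Rabs_R1. rewrite Rabs_left; lra. Qed.

Lemma sg_sq sg t : (sg = 1 \/ sg = -1) -> (sg * t) ^ 2 = t ^ 2.
Proof. intros [->| ->]; ring. Qed.

Definition Aset (s0 eta' T1 sg : R) : pset :=
  fun c => exists s t, Rabs (s - s0) <= eta' /\ 1 < t < T1 /\ c = off s (sg * t).

Lemma local_curve s0 : exists U, nbhd (gm s0) U /\ exists AP AM bP bM,
  (forall q, U q -> ~ image gx gy q -> Nbh AP q \/ Nbh AM q) /\
  (forall q, U q -> Nbh_le AP q -> ~ image gx gy q /\ (closed_region gx gy q <-> bP)) /\
  (forall q, U q -> Nbh_le AM q -> ~ image gx gy q /\ (closed_region gx gy q <-> bM)).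
Proof.
  pose proof (Hkb s0) as Hk0. pose proof (Rabs_pos (k s0)) as Hk0'.
  set (kap := (1 + Rabs (k s0)) / 2).
  assert (Hkap1 : / 2 <= kap) by (unfold kap; lra).
  assert (Hkap2 : kap < 1) by (unfold kap; lra).
  assert (Hik : 1 < / kap) by (rewrite <- Rinv_1; apply Rinv_lt_contravar; lra).
  set (T := (1 + / kap) / 2).
  assert (HT1 : 1 < T) by (unfold T; lra).
  assert (HkT : kap * T = (kap + 1) / 2) by (unfold T; field; lra).
  destruct (cont_eps k s0 (k_cpt s0) ((1 - Rabs (k s0)) / 2)) as [eta1 [Heta1 Hc]]. lra.
  set (eta := Rmin (eta1 / 2) (Rmin ((1 - kap) / 10) (L / 4))).
  assert (He1 : eta <= eta1 / 2) by (unfold eta; apply Rmin_l).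
  assert (He2 : eta <= (1 - kap) / 10) by (unfold eta; eapply Rle_trans; [apply Rmin_r|apply Rmin_l]).
  assert (He3 : eta <= L / 4) by (unfold eta; eapply Rle_trans; [apply Rmin_r|apply Rmin_r]).
  assert (He0 : 0 < eta) by (unfold eta; repeat apply Rmin_pos; lra).
  assert (Hkb' : forall u, s0 - eta <= u <= s0 + eta -> Rabs (k u) <= kap).
  { intros u Hu. assert (Rabs (u - s0) < eta1) by (apply Rabs_def1; lra).
    specialize (Hc u H). pose proof (Rabs_triang (k u - k s0) (k s0)).
    replace (k u - k s0 + k s0) with (k u) in H0 by ring. unfold kap; lra. }
  assert (HM : kap * (2 * ((s0 + eta) - (s0 - eta)) + T) < 1).
  { replace (kap * (2 * ((s0 + eta) - (s0 - eta)) + T)) with (4 * kap * eta + kap * T) by ring.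
    rewrite HkT. nra. }
  assert (KEY : forall s s' t, Rabs (s - s0) <= eta -> Rabs (s' - s0) <= eta -> Rabs t <= T ->
            t ^ 2 <= sq (gm s') (off s t)).
  { intros s s' t Hs Hs' Ht. apply Rabs_le_between in Hs. apply Rabs_le_between in Hs'.
    apply (key (s0 - eta) (s0 + eta) kap T); auto; lra. }
  destruct (sep s0 eta He0 ltac:(lra)) as [rho [Hrho Hsep]].
  assert (Fimg : forall z, image gx gy z -> dist2 z (gm s0) < rho -> exists u, Rabs (u - s0) <= eta /\ z = gm u).
  { intros z Hz Hd. destruct (image_gm z Hz) as [v ->]. destruct (Hsep v Hd) as [u [Hu Eu]].
    exists u; auto. }
  set (eta' := Rmin eta (rho / 8)).
  assert (Hp1 : eta' <= eta) by apply Rmin_l.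
  assert (Hp2 : eta' <= rho / 8) by apply Rmin_r.
  assert (Hp0 : 0 < eta') by (apply Rmin_pos; lra).
  set (delta := Rmin (rho / 4) (/ 2)).
  assert (Hd1 : delta <= rho / 4) by apply Rmin_l.
  assert (Hd2 : delta <= / 2) by apply Rmin_r.
  assert (Hd0 : 0 < delta) by (apply Rmin_pos; lra).
  set (T1 := Rmin T (1 + delta / 2)).
  assert (HT1a : T1 <= T) by apply Rmin_l.
  assert (HT1b : T1 <= 1 + delta / 2) by apply Rmin_r.
  assert (HT1c : 1 < T1) by (apply Rmin_glb_lt; lra).
  assert (Fs : forall s', Rabs (s' - s0) <= eta' -> dist2 (gm s') (gm s0) <= rho / 4).
  { intros s' Hs'. eapply Rle_trans. apply gm_lip. lra. }
  assert (F1 : forall s' tau, Rabs (s' - s0) <= eta' -> 0 < Rabs tau < delta -> ~ image gx gy (off s' tau)).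
  { intros s' tau Hs' Ht Him.
    assert (Hd : dist2 (off s' tau) (gm s0) < rho).
    { eapply Rle_lt_trans. apply off_gm_s0. pose proof (Fs s' Hs'). lra. }
    destruct (Fimg _ Him Hd) as [u [Hu Eu]].
    pose proof (KEY s' u tau ltac:(lra) Hu ltac:(lra)) as Hk'.
    rewrite <- Eu in Hk'. unfold sq in Hk'. replace ((fst (off s' tau) - fst (off s' tau)) ^ 2 +
      (snd (off s' tau) - snd (off s' tau)) ^ 2) with 0 in Hk' by ring.
    rewrite <- (pow2_abs tau) in Hk'. nra. }
  assert (F2 : forall sg s' u, (sg = 1 \/ sg = -1) -> Rabs (s' - s0) <= eta' -> 0 < u < delta ->
            path_in_compl (image gx gy) (off s' (sg * u)) (off s0 (sg * (delta / 2)))).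
  { intros sg s' u Hsg Hs' Hu.
    apply path_concat with (off s' (sg * (delta/2))).
    - apply seg_path. intros l Hl.
      replace (seg (off s' (sg * u)) (off s' (sg * (delta / 2))) l) with (off s' (sg * (u + l * (delta/2 - u)))).
      2:{ unfold seg, off; cbn [fst snd]. f_equal; ring. }
      apply F1; auto. rewrite Rabs_sig by auto.
      assert (0 < u + l * (delta/2 - u) < delta).
      { replace (u + l * (delta/2 - u)) with ((1 - l) * u + l * (delta / 2)) by ring.
        assert (0 <= (1 - l) * u) by (apply Rmult_le_pos; lra).
        assert (0 <= l * (delta/2)) by (apply Rmult_le_pos; lra).
        assert ((1 - l) * u <= (1 - l) * delta) by (apply Rmult_le_compat_l; lra).
        destruct (Req_dec l 0) as [->|Hl0].
        - lra.
        - assert (0 < l * (delta / 2)) by (apply Rmult_lt_0_compat; lra). nra. }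
      rewrite Rabs_right by lra. lra.
    - apply offset_path. intros l Hl. apply F1.
      + replace (s' + l * (s0 - s') - s0) with ((1 - l) * (s' - s0)) by ring.
        rewrite Rabs_mult, (Rabs_right (1 - l)) by lra. pose proof (Rabs_pos (s' - s0)).
        assert ((1 - l) * Rabs (s' - s0) <= 1 * Rabs (s' - s0)) by (apply Rmult_le_compat_r; lra). lra.
      + rewrite Rabs_sig by auto. rewrite Rabs_right by lra. lra. }
  assert (Hne1 : gm (s0 - eta') <> gm s0).
  { apply gm_neq. replace (s0 - eta' - s0) with (- eta') by ring. rewrite Rabs_Ropp, Rabs_right; lra. }
  assert (Hne2 : gm (s0 + eta') <> gm s0).
  { apply gm_neq. replace (s0 + eta' - s0) with eta' by ring. rewrite Rabs_right; lra. }
  set (e0 := Rmin (dist2 (gm (s0 - eta')) (gm s0)) (dist2 (gm (s0 + eta')) (gm s0))).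
  assert (He0p : 0 < e0) by (apply Rmin_pos; apply dist2_pos; auto).
  set (r := Rmin (Rmin (rho/4) (e0/3)) (Rmin delta (T1 - 1))).
  assert (Hr1 : r <= rho / 4) by (unfold r; eapply Rle_trans; [apply Rmin_l|apply Rmin_l]).
  assert (Hr2 : r <= e0 / 3) by (unfold r; eapply Rle_trans; [apply Rmin_l|apply Rmin_r]).
  assert (Hr3 : r <= delta) by (unfold r; eapply Rle_trans; [apply Rmin_r|apply Rmin_l]).
  assert (Hr4 : r <= T1 - 1) by (unfold r; eapply Rle_trans; [apply Rmin_r|apply Rmin_r]).
  assert (Hr0 : 0 < r) by (unfold r; repeat apply Rmin_pos; lra).
  exists (fun y => dist2 (gm s0) y < r). split. { exists r; split; auto. }
  exists (Aset s0 eta' T1 1), (Aset s0 eta' T1 (-1)),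
    (closed_region gx gy (off s0 (1 * (delta/2)))), (closed_region gx gy (off s0 (-1 * (delta/2)))).
  assert (H2 : forall sg, (sg = 1 \/ sg = -1) -> forall q, dist2 (gm s0) q < r ->
     Nbh_le (Aset s0 eta' T1 sg) q ->
     ~ image gx gy q /\ (closed_region gx gy q <-> closed_region gx gy (off s0 (sg * (delta/2))))).
  { intros sg Hsg q Hq [c [[s [t [Hs [Ht ->]]]] Hqc]].
    rewrite dist2_sym in Hq.
    assert (HnI : forall z, dist2 z (off s (sg * t)) <= 1 -> dist2 z (gm s0) < rho -> ~ image gx gy z).
    { intros z Hz1 Hz2 Him. destruct (Fimg z Him Hz2) as [u [Hu ->]].
      assert (Hk' : (sg * t) ^ 2 <= sq (gm u) (off s (sg * t))).
      { apply KEY; auto. lra. rewrite Rabs_sig by auto. rewrite Rabs_right; lra. }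
      apply dist2_le_iff in Hz1; [|lra]. rewrite sg_sq in Hk' by auto. nra. }
    split. { apply HnI; auto; lra. }
    set (w := off s (sg * (t - 1))).
    assert (Hw1 : dist2 w (off s (sg * t)) <= 1).
    { unfold w; rewrite off_off. replace (sg*(t-1) - sg*t) with (- sg) by ring.
      rewrite Rabs_Ropp, Rabs_sg1 by auto. lra. }
    assert (Hw2 : dist2 w (gm s0) < rho).
    { unfold w. eapply Rle_lt_trans. apply off_gm_s0. rewrite Rabs_sig by auto.
      rewrite Rabs_right by lra. pose proof (Fs s Hs). lra. }
    assert (P1 : path_in_compl (image gx gy) q w).
    { apply seg_path. intros l Hl. apply HnI. apply seg_le; auto. apply seg_lt; auto; lra. }
    assert (P2 : path_in_compl (image gx gy) w (off s0 (sg * (delta/2)))).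
    { apply F2; auto. lra. }
    apply path_region. eapply path_concat; eauto. }
  split; [|split].
  - intros q Hq Hnq.
    destruct (nearest s0 eta' q Hp0) as [ss [Hss Hmin]].
    assert (Hdq : dist2 (gm ss) q <= dist2 (gm s0) q).
    { rewrite !dist2_sq. apply sqrt_le_1_alt. apply Hmin. replace (s0 - s0) with 0 by ring.
      rewrite Rabs_R0; lra. }
    assert (Hint : Rabs (ss - s0) < eta').
    { destruct (Rle_lt_or_eq_dec _ _ Hss) as [H|H]; auto. exfalso.
      assert (Hge : e0 <= dist2 (gm ss) (gm s0)).
      { destruct (Rle_dec 0 (ss - s0)).
        - rewrite Rabs_right in H by lra. replace ss with (s0 + eta') by lra. apply Rmin_r.
        - rewrite Rabs_left in H by lra. replace ss with (s0 - eta') by lra. apply Rmin_l. }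
      pose proof (dist2_triangle (gm ss) q (gm s0)). rewrite (dist2_sym q (gm s0)) in H0. lra. }
    apply Rabs_def2 in Hint.
    assert (Hcr : (gx ss - fst q) * dx ss + (gy ss - snd q) * dy ss = 0).
    { apply (crit ss (s0 - eta') (s0 + eta')). lra. intros u Hu; apply Hmin; apply Rabs_le; lra. }
    set (d := (fst q - gx ss) * (- dy ss) + (snd q - gy ss) * dx ss).
    pose proof (normal_decomp ss q Hcr) as Eqd. fold d in Eqd. clearbody d.
    assert (Hdr : Rabs d < r).
    { rewrite <- (off_dist ss d). rewrite <- Eqd. rewrite dist2_sym. lra. }
    assert (Hdn : d <> 0).
    { intro Hd. apply Hnq. exists ss. rewrite Eqd, Hd. unfold off. f_equal; ring. }
    destruct (Rlt_dec 0 d).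
    + left. exists (off ss (1 * (1 + d/2))). split.
      * rewrite Rabs_right in Hdr by lra. exists ss, (1 + d/2). repeat split; auto; lra.
      * rewrite Eqd, off_off. replace (d - 1 * (1 + d/2)) with (-(1 - d/2)) by lra.
        rewrite Rabs_Ropp, Rabs_right; rewrite Rabs_right in Hdr by lra; lra.
    + right. exists (off ss (-1 * (1 - d/2))). split.
      * rewrite Rabs_left in Hdr by lra. exists ss, (1 - d/2). repeat split; auto; lra.
      * rewrite Eqd, off_off. replace (d - -1 * (1 - d/2)) with (1 + d/2) by lra.
        rewrite Rabs_right; rewrite Rabs_left in Hdr by lra; lra.
  - intros q Hq Hn. apply (H2 1); auto.
  - intros q Hq Hn. apply (H2 (-1)); auto.
Qed.

Lemma local_off x : ~ image gx gy x -> exists U, nbhd x U /\ exists AP AM bP bM,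
  (forall q, U q -> ~ image gx gy q -> Nbh AP q \/ Nbh AM q) /\
  (forall q, U q -> Nbh_le AP q -> ~ image gx gy q /\ (closed_region gx gy q <-> bP)) /\
  (forall q, U q -> Nbh_le AM q -> ~ image gx gy q /\ (closed_region gx gy q <-> bM)).
Proof.
  intros Hx. destruct (sep_pt x Hx) as [r [Hr Hd]].
  assert (HnI : forall z, dist2 z x < r -> ~ image gx gy z).
  { intros z Hz Him. destruct (image_gm z Him) as [v ->]. specialize (Hd v). lra. }
  assert (H2 : forall q, dist2 x q < r -> ~ image gx gy q /\ (closed_region gx gy q <-> closed_region gx gy x)).
  { intros q Hq. rewrite dist2_sym in Hq. split. apply HnI; auto.
    symmetry. apply path_region. apply seg_path. intros l Hl. apply HnI. apply seg_lt; auto.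
    rewrite dist2_refl; lra. }
  exists (fun y => dist2 x y < r). split. { exists r; split; auto. }
  exists fullset, fullset, (closed_region gx gy x), (closed_region gx gy x).
  split; [|split].
  - intros q _ _. left. exists q. split. exact I. rewrite dist2_refl; lra.
  - intros q Hq _. apply H2; auto.
  - intros q Hq _. apply H2; auto.
Qed.

Lemma local_all x : exists U, nbhd x U /\ exists AP AM bP bM,
  (forall q, U q -> ~ image gx gy q -> Nbh AP q \/ Nbh AM q) /\
  (forall q, U q -> Nbh_le AP q -> ~ image gx gy q /\ (closed_region gx gy q <-> bP)) /\
  (forall q, U q -> Nbh_le AM q -> ~ image gx gy q /\ (closed_region gx gy q <-> bM)).
Proof.
  destruct (classic (image gx gy x)) as [Hx|Hx].
  - destruct (image_gm x Hx) as [s0 ->]. apply local_curve.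
  - apply local_off; auto.
Qed.

End Curve.

Theorem theorem4p2 (gx gy : R -> R) (L : R) :
  0 < L ->
  (forall s, gx (s + L) = gx s /\ gy (s + L) = gy s) ->
  (forall n s, ex_derive (Derive_n gx n) s /\ ex_derive (Derive_n gy n) s) ->
  (forall s, (Derive gx s) ^ 2 + (Derive gy s) ^ 2 = 1) ->
  (forall s t, 0 <= s < L -> 0 <= t < L ->
     gx s = gx t -> gy s = gy t -> s = t) ->
  (exists k : R -> R,
     (forall s, Derive_n gx 2 s = k s * (- Derive gy s) /\
                Derive_n gy 2 s = k s * Derive gx s) /\
     (forall s, Rabs (k s) < 1)) ->
  locally_drawable (closed_region gx gy) /\
  locally_cdrawable (closed_region gx gy).
Proof.
  intros HL Hper Hsm Hunit Hinj [k [Hk Hkb]].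
  split; intros x;
  destruct (local_all gx gy L k HL Hper Hsm Hunit Hinj Hk Hkb x) as [U [HU [AP [AM [bP [bM [H1 [H2 H3]]]]]]]];
  exists U; split; auto.
  - apply (repr Nbh (fun A x H => H) Nbh_Nbh_le U _ _ AP AM bP bM H1 H2 H3).
    intros q Hq; left; auto.
  - apply (repr Nbh_le Nbh_Nbh_le (fun A x H => H) U _ _ AP AM bP bM H1 H2 H3).
    intros q Hq; left; auto.
Qed.
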